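(* There exists a countable collection $\mathcal{L}$ of languages (over $\mathcal{X}=\mathbb{N}^2$) with closure dimension $0$ such that for every $\varepsilon>0$ and every $n\in\mathbb{N}$, there is no $\varepsilon$-DP randomized map $A:\mathcal{X}^n\to\mathcal{X}$ satisfying $\Pr[A(x_1,\dots,x_n)\in K\setminus\{x_1,\dots,x_n\}]\ge 2/3$ for every $K\in\mathcal{L}$ and every $n$ distinct elements $x_1,\dots,x_n\in K$ (equivalently, every length-$n$ prefix of an enumeration of $K$ without repetitions).
   Context: A language is an infinite subset of $\mathcal{X}$. For a collection $\mathcal{L}'$, $\mathrm{Cl}(\mathcal{L}')=\bigcap_{L\in\mathcal{L}'}L$; the closure dimension of $\mathcal{L}$ is the smallest $d\in\{-1\}\cup\mathbb{N}$ such that every subcollection $\mathcal{L}'\subseteq\mathcal{L}$ has $|\mathrm{Cl}(\mathcal{L}')|=\infty$ or $|\mathrm{Cl}(\mathcal{L}')|\le d$. A randomized map $A:\mathcal{X}^n\to\mathcal{X}$ is $\varepsilon$-DP if for all $X,X'\in\mathcal{X}^n$ differing in exactly one coordinate and all events $E$, $\Pr[A(X)\in E]\le e^\varepsilon\Pr[A(X')\in E]$. *)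

(* Defs.v *)
From HB Require Import structures.
From mathcomp Require Import all_boot all_order all_algebra.
From mathcomp Require Import all_classical all_reals.
From mathcomp Require Import ereal measure probability.
From mathcomp Require Import sequences exp.
Set Implicit Arguments. Unset Strict Implicit. Unset Printing Implicit Defensive.
Import Order.TTheory GRing.Theory Num.Theory.
Local Open Scope classical_set_scope.
Local Open Scope ring_scope.

Definition X : Type := (nat * nat)%type.
HB.instance Definition _ := Pointed.on X.
HB.instance Definition _ := @isMeasurable.Build default_measure_display
  X discrete_measurable discrete_measurable0
  discrete_measurableC discrete_measurableU.

Definition language (K : set X) : Prop := infinite_set K.

(** Closure of a subcollection: the intersection of its members
    (the intersection of the empty collection is all of X). *)
Definition Cl (L' : set (set X)) : set X := \bigcap_(K in L') K.

(** [closure_bound L d] : every subcollection L' of L has |Cl(L')| = oo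
    or |Cl(L')| <= d  (d ranges over {-1} u N, represented in int). *)
Definition closure_bound (L : set (set X)) (d : int) : Prop :=
  forall L' : set (set X), L' `<=` L ->
    infinite_set (Cl L') \/
    (exists s : seq X, Cl L' = [set` s] /\ ((size s)%:Z <= d)%R).

Definition closure_dimension (L : set (set X)) (d : int) : Prop :=
  (-1 <= d)%R /\ closure_bound L d /\
  forall d' : int, (-1 <= d')%R -> closure_bound L d' -> (d <= d')%R.

Definition neighbors n (x x' : 'I_n -> X) : Prop :=
  exists i : 'I_n, x i <> x' i /\ forall j : 'I_n, j != i -> x j = x' j.

Definition randomized_map (R : realType) (n : nat) :=
  ('I_n -> X) -> probability X R.

Definition eps_DP (R : realType) n (eps : R) (A : randomized_map R n) : Prop :=
  forall x x' : 'I_n -> X, neighbors x x' ->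
  forall E : set X, measurable E ->
    (A x E <= (expR eps)%:E * A x' E)%E.

(* Main.v *)
Require Import Defs.
From HB Require Import structures.
From mathcomp Require Import all_boot all_order all_algebra.
From mathcomp Require Import all_classical all_reals.
From mathcomp Require Import ereal measure probability sequences exp.
Import Order.TTheory GRing.Theory Num.Theory.
Local Open Scope classical_set_scope.
Local Open Scope ring_scope.

Definition row (j : nat) : set X := [set p | p.1 = j].

Lemma row_inf j : infinite_set (row j).
Proof.
move=> fin.
have : finite_set ((fun k : nat => (j, k) : X) @^-1` row j).
  apply: finite_preimage fin => a b _ _ [] //.
have -> : (fun k : nat => (j, k) : X) @^-1` row j = setT.
  by apply/seteqP; split.
exact: infinite_nat.
Qed.

Lemma measX (E : set X) : measurable E.
Proof. exact: I. Qed.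

Lemma dp_step (R : realType) n (eps : R) (A : randomized_map R n) :
  eps_DP eps A -> 0 < eps -> forall (x x' : 'I_n -> X) (k : nat) E, (k < n)%N ->
  (A (fun i => if (i < k)%N then x' i else x i) E <=
   (expR eps)%:E * A (fun i => if (i < k.+1)%N then x' i else x i) E)%E.
Proof.
move=> dp ep x x' k E kn.
have [eqk|nek] := eqVneq (x' (Ordinal kn)) (x (Ordinal kn)).
  have -> : (fun i : 'I_n => if (i < k)%N then x' i else x i) =
            (fun i => if (i < k.+1)%N then x' i else x i).
    apply/funext => i; rewrite ltnS.
    case: (ltngtP i k) => [ik|ik|ik] //.
    have -> : i = Ordinal kn by apply: val_inj.
    by rewrite eqk.
  apply: lee_pemull; first exact: measure_ge0.
  rewrite lee_fin; apply: le_trans (expR_ge1Dx eps).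
  by rewrite lerDl ltW.
apply: dp (measX E); exists (Ordinal kn); split => /=.
  by rewrite ltnn ltnSn; apply/eqP; rewrite eq_sym.
move=> j /eqP jk; rewrite ltnS.
have jk' : nat_of_ord j <> k by move=> e; apply: jk; apply: val_inj.
by case: (ltngtP j k) => [ik|ik|ik] //.
Qed.

Lemma dp_chain {R : realType} {n} {eps : R} {A : randomized_map R n} :
  eps_DP eps A -> 0 < eps -> forall (x x' : 'I_n -> X) E,
  (A x E <= (expR eps ^+ n)%:E * A x' E)%E.
Proof.
move=> dp ep x x' E.
set z := fun k (i : 'I_n) => if (i < k)%N then x' i else x i.
have H : forall k, (k <= n)%N -> (A x E <= (expR eps ^+ k)%:E * A (z k) E)%E.
  elim=> [_|k IH kn].
    rewrite expr0 mul1e; have -> : z 0%N = x by apply/funext.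
    by [].
  apply: le_trans (IH (ltnW kn)) _.
  rewrite exprSr EFinM -muleA; apply: lee_wpmul2l.
    by rewrite lee_fin exprn_ge0 // expR_ge0.
  exact: dp_step.
have := H n (leqnn n).
by have -> : z n = x' by apply/funext => i; rewrite /z ltn_ord.
Qed.


Lemma row_in (j : nat) : (row @` setT) (row j).
Proof. by exists j. Qed.

Theorem corollaryD1 :
  exists L : set (set X),
    countable L /\
    (forall K, L K -> language K) /\
    closure_dimension L 0 /\
    forall (R : realType) (eps : R), 0 < eps -> forall n : nat,
      ~ exists A : randomized_map R n,
          eps_DP eps A /\
          forall K : set X, L K ->
          forall x : 'I_n -> X, injective x -> (forall i, K (x i)) ->
            ((2 / 3)%:E <= A x (K `\` range x))%E.
Proof.
exists (row @` setT); split; first exact: card_image_le.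
split; first by move=> K [j _ <-]; exact: row_inf.
split.
  split; first by [].
  split.
    move=> L' sub.
    case: (pselect (exists K1 K2, L' K1 /\ L' K2 /\ K1 <> K2)).
      move=> [K1 [K2 [h1 [h2 ne]]]]; right; exists [::]; split; last by [].
      have [j1 _ e1] := sub _ h1; have [j2 _ e2] := sub _ h2.
      apply/seteqP; split => p hp //=.
      have p1 := hp K1 h1; have p2 := hp K2 h2.
      rewrite -e1 in p1; rewrite -e2 in p2.
      by exfalso; apply: ne; rewrite -e1 -e2 /row -p1 -p2.
    move=> nex; left.
    case: (pselect (exists K, L' K)).
      move=> [K hK]; have [j _ e] := sub _ hK.
      apply: (sub_infinite_set _ (row_inf j)) => p hp K' hK'.
      have -> : K' = K.
        apply: contrapT => ne; apply: nex; exists K', K; split => //.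
      by rewrite -e.
    move=> nK; apply: (sub_infinite_set _ (row_inf 0)) => p hp K' hK'.
    by exfalso; apply: nK; exists K'.
  move=> d' _ cb.
  have sub2 : [set K | K = row 0 \/ K = row 1] `<=` row @` setT.
    by move=> K [->|->]; apply: row_in.
  case: (cb _ sub2) => [inf|[s [e le]]].
    exfalso; apply: inf.
    have -> : Cl [set K | K = row 0 \/ K = row 1] = set0.
      apply/seteqP; split => p hp //.
      have p0 := hp (row 0) (or_introl erefl).
      have p1 := hp (row 1) (or_intror erefl).
      by move: p0 p1; rewrite /row /= => ->.
    exact: finite_set0.
  by apply: le_trans le.
move=> R eps ep n [A [dp hA]].
set en := expR eps ^+ n.
have en0 : 0 < en by rewrite exprn_gt0 // expR_gt0.
set c := en^-1 * (2 / 3).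
have c0 : 0 < c by rewrite mulr_gt0 // ?invr_gt0 // divr_gt0.
set x0 := fun _ : 'I_n => ((0, 0)%N : X).
have hc : forall j, (c%:E <= A x0 (row j))%E.
  move=> j.
  set xj := fun i : 'I_n => ((j, nat_of_ord i) : X).
  have ij : injective xj by move=> a b [] /val_inj.
  have h := hA (row j) (row_in j) xj ij (fun i => erefl).
  have h2 : ((2 / 3)%:E <= en%:E * A x0 (row j))%E.
    apply: (le_trans h); have hc1 := dp_chain dp ep xj x0 (row j); apply: le_trans hc1.
    by rewrite le_measure // ?inE; try exact: measX.
  rewrite /c EFinM; apply: le_trans (lee_wpmul2l _ h2) _.
    by rewrite lee_fin invr_ge0 ltW.
  by rewrite muleA -EFinM mulVf ?gt_eqF // mul1e.
have hm : forall m : nat, ((m%:R * c)%:E <= A x0 [set p : X | (p.1 < m)%N])%E.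
  elim=> [|m IH]; first by rewrite mul0r measure_ge0.
  have -> : [set p : X | (p.1 < m.+1)%N] = [set p : X | (p.1 < m)%N] `|` row m.
    apply/seteqP; split => p /=; rewrite /row.
      by rewrite ltnS leq_eqVlt => /orP[/eqP e|h]; [right|left].
    by move=> [h|/= ->] //; apply: ltnW.
  rewrite measureU; [|exact: measX|exact: measX|].
    by rewrite -natr1 mulrDl mul1r EFinD; exact: leeD IH (hc m).
  apply/seteqP; split => p //= [] h; rewrite /row => e.
  by rewrite e ltnn in h.
set m := Num.Def.archi_bound c^-1.
have mc : 1 < m%:R * c.
  have ci : 0 <= c^-1 by rewrite invr_ge0 ltW.
  have := archi_boundP ci.
  move=> h; have e1 : (1 : R) = c^-1 * c by rewrite mulVf // lt0r_neq0.
  by rewrite {1}e1 ltr_pM2r.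
have := le_trans (hm m) (probability_le1 (A x0) (measX _)).
by rewrite lee_fin leNgt mc.
Qed.
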